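(* Let $F\in\mathrm{Lip}_{\rm loc}(\mathbb{R})$ and suppose $F$ is linear (affine) on an interval $(a,b)\subset\mathbb{R}$ for some $a<b$. Then there exists an initial datum $g\in\mathrm{Lip}(\mathbb{R})$ and a constant $c_0>0$ depending only on $F$ and $g$ such that for every $\varepsilon\in(0,\tfrac14)$, \[ |u^\varepsilon(0,1)-u(0,1)|\ge c_0\sqrt{\varepsilon}, \] where $u^\varepsilon$ is the viscosity solution of $u^\varepsilon_t+F(u^\varepsilon_x)=\varepsilon u^\varepsilon_{xx}$ in $\mathbb{R}\times(0,\infty)$, $u^\varepsilon(\cdot,0)=g$, and $u$ is the viscosity solution of $u_t+F(u_x)=0$ in $\mathbb{R}\times(0,\infty)$, $u(\cdot,0)=g$. *)

(* Defs.v *)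
From Stdlib Require Import Reals.
From Coquelicot Require Import Coquelicot.
Open Scope R_scope.

Definition loc_lipschitz (F : R -> R) : Prop :=
  forall r : R, exists L : R, forall p q : R,
    Rabs p <= r -> Rabs q <= r -> Rabs (F p - F q) <= L * Rabs (p - q).

Definition lipschitz (g : R -> R) : Prop :=
  exists L : R, forall x y : R, Rabs (g x - g y) <= L * Rabs (x - y).

Definition affine_on (F : R -> R) (a b : R) : Prop :=
  exists p q : R, forall x : R, a < x < b -> F x = p * x + q.

Definition cont2 (f : R -> R -> R) : Prop :=
  forall x t eps : R, 0 < eps -> exists delta : R, 0 < delta /\
    forall y s : R, Rabs (y - x) < delta -> Rabs (s - t) < delta ->
      Rabs (f y s - f x t) < eps.

Definition C1_test (phi phit phix : R -> R -> R) : Prop :=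
  cont2 phi /\ cont2 phit /\ cont2 phix /\
  (forall x t, is_derive (fun s => phi x s) t (phit x t)) /\
  (forall x t, is_derive (fun y => phi y t) x (phix x t)).

Definition C21_test (phi phit phix phixx : R -> R -> R) : Prop :=
  C1_test phi phit phix /\ cont2 phixx /\
  (forall x t, is_derive (fun y => phix y t) x (phixx x t)).

Definition loc_max_at (w : R -> R -> R) (x0 t0 : R) : Prop :=
  exists r : R, 0 < r /\ forall y s : R, Rabs (y - x0) < r -> Rabs (s - t0) < r ->
    0 < s -> w y s <= w x0 t0.
Definition loc_min_at (w : R -> R -> R) (x0 t0 : R) : Prop :=
  exists r : R, 0 < r /\ forall y s : R, Rabs (y - x0) < r -> Rabs (s - t0) < r ->
    0 < s -> w x0 t0 <= w y s.

Definition cont_closed_half (u : R -> R -> R) : Prop :=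
  forall x t eps : R, 0 <= t -> 0 < eps -> exists delta : R, 0 < delta /\
    forall y s : R, 0 <= s -> Rabs (y - x) < delta -> Rabs (s - t) < delta ->
      Rabs (u y s - u x t) < eps.

Definition visc_sol_viscous (eps : R) (F : R -> R) (u : R -> R -> R) : Prop :=
  cont_closed_half u /\
  (forall phi phit phix phixx x0 t0, C21_test phi phit phix phixx -> 0 < t0 ->
     loc_max_at (fun y s => u y s - phi y s) x0 t0 ->
     phit x0 t0 + F (phix x0 t0) - eps * phixx x0 t0 <= 0) /\
  (forall phi phit phix phixx x0 t0, C21_test phi phit phix phixx -> 0 < t0 ->
     loc_min_at (fun y s => u y s - phi y s) x0 t0 ->
     phit x0 t0 + F (phix x0 t0) - eps * phixx x0 t0 >= 0).

Definition visc_sol_HJ (F : R -> R) (u : R -> R -> R) : Prop :=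
  cont_closed_half u /\
  (forall phi phit phix x0 t0, C1_test phi phit phix -> 0 < t0 ->
     loc_max_at (fun y s => u y s - phi y s) x0 t0 ->
     phit x0 t0 + F (phix x0 t0) <= 0) /\
  (forall phi phit phix x0 t0, C1_test phi phit phix -> 0 < t0 ->
     loc_min_at (fun y s => u y s - phi y s) x0 t0 ->
     phit x0 t0 + F (phix x0 t0) >= 0).

(* Uniqueness class for the Cauchy problems with Lipschitz data:
   uniformly continuous on R x [0,oo) and Lipschitz in x uniformly in t. *)
Definition sol_class (u : R -> R -> R) : Prop :=
  (forall eps : R, 0 < eps -> exists delta : R, 0 < delta /\
    forall x y t s : R, 0 <= t -> 0 <= s -> Rabs (y - x) < delta ->
      Rabs (s - t) < delta -> Rabs (u y s - u x t) < eps) /\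
  (exists L : R, forall x y t : R, 0 <= t -> Rabs (u x t - u y t) <= L * Rabs (x - y)).

Definition initial_datum (u : R -> R -> R) (g : R -> R) : Prop :=
  forall x : R, u x 0 = g x.

(* Main.v *)
Require Import Defs.
From Stdlib Require Import Reals Lra Psatz ClassicalEpsilon.
From Coquelicot Require Import Coquelicot.
Open Scope R_scope.


Lemma cont_pt_eps (f : R -> R) x :
  (forall e, 0 < e -> exists d, 0 < d /\ forall y, Rabs (y - x) < d -> Rabs (f y - f x) < e) ->
  continuity_pt f x.
Proof.
  intros H e He. destruct (H e He) as [d [Hd H']]. exists d. split; auto.
  intros y [_ Hy]. simpl in *. unfold R_dist in *. apply H'. exact Hy.
Qed.

Lemma cont2_of (f : R -> R -> R) :
  (forall x t, continuous (fun p : R * R => f (fst p) (snd p)) (x, t)) -> cont2 f.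
Proof.
  intros H x t eps He. specialize (H x t).
  apply (proj1 (filterlim_locally _ _)) with (eps := mkposreal eps He) in H.
  destruct H as [d Hd]. exists d. split. apply cond_pos.
  intros y s Hy Hs. apply (Hd (y, s)). split; assumption.
Qed.

Lemma cont2_x (f : R -> R -> R) t x : cont2 f -> continuity_pt (fun y => f y t) x.
Proof.
  intros H. apply cont_pt_eps. intros e He. destruct (H x t e He) as [d [Hd H']].
  exists d. split; auto. intros y Hy. apply H'; auto. rewrite Rminus_diag, Rabs_R0. auto.
Qed.

Lemma sqrt_lip a b d : 0 <= d -> Rabs (sqrt (a*a+d) - sqrt (b*b+d)) <= Rabs (a - b).
Proof.
  intros Hd.
  assert (Ha : 0 <= a*a+d) by nra. assert (Hb : 0 <= b*b+d) by nra.
  pose proof (sqrt_sqrt _ Ha) as Ea. pose proof (sqrt_sqrt _ Hb) as Eb.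
  pose proof (sqrt_pos (a*a+d)) as Pa. pose proof (sqrt_pos (b*b+d)) as Pb.
  set (sa := sqrt (a*a+d)) in *. set (sb := sqrt (b*b+d)) in *.
  assert (Ra : Rabs a <= sa). { assert (Rabs a * Rabs a = a * a) by (rewrite <- Rabs_mult; apply Rabs_pos_eq; nra).
    pose proof (Rabs_pos a). nra. }
  assert (Rb : Rabs b <= sb). { assert (Rabs b * Rabs b = b * b) by (rewrite <- Rabs_mult; apply Rabs_pos_eq; nra).
    pose proof (Rabs_pos b). nra. }
  destruct (Req_dec (sa + sb) 0) as [Z|NZ].
  - assert (sa = 0) by lra. assert (sb = 0) by lra.
    rewrite H, H0. rewrite Rminus_diag, Rabs_R0. apply Rabs_pos.
  - assert (E : sa - sb = (a - b) * (a + b) / (sa + sb)) .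
    { apply (Rmult_eq_reg_r (sa+sb)); [| exact NZ]. unfold Rdiv.
      rewrite Rmult_assoc, Rinv_l by exact NZ. nra. }
    rewrite E. unfold Rdiv. rewrite !Rabs_mult. rewrite Rabs_inv.
    rewrite (Rabs_pos_eq (sa+sb)) by lra.
    assert (Rabs (a+b) <= sa + sb) by (pose proof (Rabs_triang a b); lra).
    assert (0 < sa + sb) by lra.
    pose proof (Rabs_pos (a-b)).
    apply Rle_trans with (Rabs (a-b) * (sa+sb) * / (sa+sb)).
    + apply Rmult_le_compat_r. left; apply Rinv_0_lt_compat; lra. apply Rmult_le_compat_l; lra.
    + right. field. lra.
Qed.

Lemma abs_le_inv x a : Rabs x <= a -> -a <= x <= a.
Proof. unfold Rabs; destruct Rcase_abs; intros; lra. Qed.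
Lemma abs_lt_inv x a : Rabs x < a -> -a < x < a.
Proof. unfold Rabs; destruct Rcase_abs; intros; lra. Qed.
Lemma abs_lt x a : -a < x < a -> Rabs x < a.
Proof. unfold Rabs; destruct Rcase_abs; intros; lra. Qed.
Lemma abs_le x a : -a <= x <= a -> Rabs x <= a.
Proof. unfold Rabs; destruct Rcase_abs; intros; lra. Qed.


Lemma compare (Phi : R -> R -> R) :
 (forall t, 0 <= t -> forall x, continuity_pt (fun y => Phi y t) x) ->
 (forall e, 0 < e -> exists d, 0 < d /\ forall x t s, 0 <= t -> 0 <= s -> Rabs (t - s) < d ->
     Rabs (Phi x t - Phi x s) <= e) ->
 (exists C, forall x t, 0 <= t -> Phi x t <= C - (Rabs x + t)) ->
 (forall x, Phi x 0 <= 0) ->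
 (forall xs ts, 0 < ts -> (forall y s, 0 <= s -> Phi y s <= Phi xs ts) -> False) ->
 Phi 0 1 <= 0.
Proof.
  intros Hc Heq [C HC] H0 Hno.
  set (X := Rmax 1 (C - Phi 0 1)).
  assert (HX1 : 1 <= X) by apply Rmax_l.
  assert (HX2 : C - Phi 0 1 <= X) by apply Rmax_r.
  assert (Hbox : forall x t, 0 <= t -> Phi x t <= Phi 0 1 \/ (-X <= x <= X /\ t <= X)).
  { intros x t Ht. destruct (Rle_dec (C - Phi 0 1) (Rabs x + t)) as [L|L].
    - left. specialize (HC x t Ht). lra.
    - right. pose proof (Rabs_pos x). assert (Rabs x <= X) by lra.
      split; [apply abs_le_inv; auto | lra]. }
  assert (Hxm : forall t, exists x, (-X <= x <= X) /\
             forall y, -X <= y <= X -> Phi y (Rmax 0 t) <= Phi x (Rmax 0 t)).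
  { intros t. destruct (continuity_ab_maj (fun y => Phi y (Rmax 0 t)) (-X) X) as [x [Hx1 Hx2]].
    lra. intros c _. apply Hc. apply Rmax_l.
    exists x. split; auto. }
  set (xm := fun t => proj1_sig (constructive_indefinite_description _ (Hxm t))).
  assert (Pxm : forall t, (-X <= xm t <= X) /\
             forall y, -X <= y <= X -> Phi y (Rmax 0 t) <= Phi (xm t) (Rmax 0 t)).
  { intros t. unfold xm. destruct (constructive_indefinite_description _ (Hxm t)). simpl. auto. }
  set (M := fun t => Phi (xm t) (Rmax 0 t)).
  assert (Rm : forall t s, Rabs (Rmax 0 t - Rmax 0 s) <= Rabs (t - s)).
  { intros t s. unfold Rmax. destruct (Rle_dec 0 t); destruct (Rle_dec 0 s);
    unfold Rabs; repeat destruct Rcase_abs; lra. }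
  assert (HM : forall c, continuity_pt M c).
  { intros c. apply cont_pt_eps. intros e He.
    destruct (Heq (e/2)) as [d [Hd Hd']]. lra. exists d. split; auto.
    intros y Hy. unfold M.
    destruct (Pxm y) as [Py1 Py2]. destruct (Pxm c) as [Pc1 Pc2].
    assert (Hr : Rabs (Rmax 0 y - Rmax 0 c) < d) by (pose proof (Rm y c); lra).
    assert (Hr' : Rabs (Rmax 0 c - Rmax 0 y) < d) by (rewrite Rabs_minus_sym; auto).
    pose proof (Rmax_l 0 y) as Q1. pose proof (Rmax_l 0 c) as Q2.
    pose proof (Hd' (xm c) _ _ Q1 Q2 Hr) as Q3. pose proof (Hd' (xm y) _ _ Q1 Q2 Hr) as Q4.
    pose proof (Py2 (xm c) Pc1) as Q5. pose proof (Pc2 (xm y) Py1) as Q6.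
    apply abs_le_inv in Q3; apply abs_le_inv in Q4. apply abs_lt; lra. }
  destruct (continuity_ab_maj M 0 X) as [ts [Hts1 Hts2]]. lra. intros; apply HM.
  assert (Ets : Rmax 0 ts = ts) by (apply Rmax_right; lra).
  assert (HMts : M ts = Phi (xm ts) ts) by (unfold M; rewrite Ets; auto).
  assert (HMs : forall s y, 0 <= s -> -X <= y <= X -> Phi y s <= M s).
  { intros s y Hs Hy. unfold M. destruct (Pxm s) as [_ P2].
    pose proof (P2 y Hy) as P3. rewrite Rmax_right in P3 |- * by lra. auto. }
  assert (Hglob : forall y s, 0 <= s -> Phi y s <= Phi (xm ts) ts).
  { intros y s Hs. rewrite <- HMts.
    assert (Hm1 : Phi 0 1 <= M ts).
    { apply Rle_trans with (M 1). apply HMs; lra. apply Hts1; lra. }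
    destruct (Hbox y s Hs) as [B|[B1 B2]].
    - lra.
    - apply Rle_trans with (M s). apply HMs; auto. apply Hts1. lra. }
  destruct Hts2 as [T0 _]. destruct T0 as [Tp|Tz].
  - exfalso. apply (Hno (xm ts) ts Tp Hglob).
  - subst ts. apply Rle_trans with (Phi (xm 0) 0). apply Hglob; lra. apply H0.
Qed.

Lemma sol_growth u : sol_class u -> exists B, 0 <= B /\
  forall x t, 0 <= t -> Rabs (u x t - u 0 0) <= B * (1 + Rabs x + t).
Proof.
  intros [Huc [L HL]].
  destruct (Huc 1 Rlt_0_1) as [d [Hd Hd']].
  set (h := d/2). assert (Hh : 0 < h) by (unfold h; lra).
  assert (Hn : forall n : nat, forall t, 0 <= t <= INR n * h -> Rabs (u 0 t - u 0 0) <= INR n).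
  { induction n as [|n IH]; intros t Ht.
    - simpl in Ht. assert (t = 0) by lra. subst t. rewrite Rminus_diag, Rabs_R0. simpl; lra.
    - rewrite S_INR in Ht |- *. pose proof (pos_INR n).
      destruct (Rle_dec t (INR n * h)) as [L1|L1].
      + specialize (IH t (conj (proj1 Ht) L1)). lra.
      + destruct (Rle_dec h t) as [L2|L2].
        2:{ assert (Rabs (u 0 t - u 0 0) < 1); [|lra].
            apply (Hd' 0 0 0 t); [lra|lra| |].
            rewrite Rminus_diag, Rabs_R0; lra. rewrite Rminus_0_r, Rabs_pos_eq; unfold h in *; lra. }
        assert (Ht' : 0 <= t - h <= INR n * h) by lra.
        specialize (IH _ Ht').
        assert (Rabs (u 0 t - u 0 (t - h)) < 1).
        { apply (Hd' 0 0 (t-h) t); [lra|lra| |].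
          rewrite Rminus_diag, Rabs_R0; lra.
          replace (t - (t - h)) with h by ring. rewrite Rabs_pos_eq; unfold h in *; lra. }
        replace (u 0 t - u 0 0) with ((u 0 t - u 0 (t - h)) + (u 0 (t-h) - u 0 0)) by ring.
        eapply Rle_trans. apply Rabs_triang. lra. }
  exists (Rabs L + 1 + / h). split.
  { pose proof (Rabs_pos L). pose proof (Rinv_0_lt_compat h Hh). lra. }
  intros x t Ht.
  destruct (nfloor_ex (t / h)) as [n Hn'].
  { apply Rmult_le_pos; auto. left; apply Rinv_0_lt_compat; auto. }
  assert (E1 : Rabs (u 0 t - u 0 0) <= t / h + 1).
  { specialize (Hn (S n) t). rewrite S_INR in Hn.
    assert (INR n + 1 <= t / h + 1) by lra.
    assert (t <= (INR n + 1) * h).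
    { destruct Hn' as [_ Hn2]. apply (Rmult_lt_compat_r h) in Hn2; auto.
      unfold Rdiv in Hn2. rewrite Rmult_assoc, Rinv_l in Hn2 by lra. lra. }
    specialize (Hn (conj Ht H0)). lra. }
  assert (E2 : Rabs (u x t - u 0 t) <= Rabs L * Rabs x).
  { eapply Rle_trans. apply HL; auto. rewrite Rminus_0_r.
    apply Rmult_le_compat_r. apply Rabs_pos. apply Rle_abs. }
  replace (u x t - u 0 0) with ((u x t - u 0 t) + (u 0 t - u 0 0)) by ring.
  eapply Rle_trans. apply Rabs_triang.
  pose proof (Rabs_pos L). pose proof (Rabs_pos x). pose proof (Rinv_0_lt_compat h Hh).
  unfold Rdiv in E1. nra.
Qed.


Definition sq z := sqrt (z*z+1).
Definition sp z := (z + sq z)/2.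
Definition sp1 z := (1 + z / sq z)/2.
Definition sp2 z := (sq z - z * (z / sq z)) / (sq z * sq z) / 2.
Definition ddq x := (sq x - x * (x / sq x)) / (sq x * sq x).
Definition dq z := z / sq z.

Lemma pos1 z : 0 < z*z+1.
Proof. nra. Qed.
Lemma sq_pos z : 0 < sq z.
Proof. unfold sq. apply sqrt_lt_R0. nra. Qed.
Lemma sq_sq z : sq z * sq z = z*z+1.
Proof. unfold sq. apply sqrt_sqrt. nra. Qed.
Lemma sq_gt z : Rabs z < sq z.
Proof. pose proof (sq_pos z). pose proof (sq_sq z). pose proof (Rabs_pos z).
  assert (Rabs z * Rabs z = z * z) by (rewrite <- Rabs_mult; apply Rabs_pos_eq; nra). nra. Qed.
Lemma sq_ne z : sq z <> 0.
Proof. pose proof (sq_pos z). lra. Qed.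

Ltac foldsq := repeat match goal with |- context [sqrt (?a * ?a + 1)] => fold (sq a) end;
  unfold Rminus; repeat match goal with |- context [sqrt (?a * ?a + 1)] => fold (sq a) end.

Ltac dsolve := auto_derive; foldsq;
  first [ apply sq_ne | (field; repeat split; try apply sq_ne; fail) |
          (repeat split; try apply pos1; try apply sq_ne) ].

Definition chi S K R x t := S * sp (sq x + K * t - R).
Definition chit S K R x t := S * sp1 (sq x + K * t - R) * K.
Definition chix S K R x t := S * sp1 (sq x + K * t - R) * dq x.
Definition chixx S K R x t :=
  S * (sp2 (sq x + K * t - R) * dq x * dq x + sp1 (sq x + K * t - R) * ddq x).

Lemma D_chi_t S K R x t : is_derive (fun s => chi S K R x s) t (chit S K R x t).
Proof.
  unfold chi, chit, sp, sp1, sq. auto_derive.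
  - apply pos1.
  - foldsq. field; repeat split; try apply sq_ne.
Qed.

Lemma D_chi_x S K R x t : is_derive (fun y => chi S K R y t) x (chix S K R x t).
Proof.
  unfold chi, chix, sp, sp1, dq, sq. dsolve.
Qed.

Lemma D_chix_x S K R x t : is_derive (fun y => chix S K R y t) x (chixx S K R x t).
Proof.
  unfold chixx, chix, sp, sp1, sp2, ddq, dq, sq. dsolve.
Qed.

Lemma sq_ge1 z : 1 <= sq z.
Proof. pose proof (sq_pos z). pose proof (sq_sq z). nra. Qed.
Lemma dq_bound z : Rabs (dq z) <= 1.
Proof. unfold dq. pose proof (sq_pos z). pose proof (sq_gt z).
  unfold Rdiv. rewrite Rabs_mult, Rabs_inv, (Rabs_pos_eq (sq z)) by lra.
  apply (Rmult_le_reg_r (sq z)); auto. rewrite Rmult_assoc, Rinv_l by lra. lra. Qed.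
Lemma sp1_bounds z : 0 < sp1 z < 1.
Proof. unfold sp1. pose proof (dq_bound z) as H. unfold dq in H. apply abs_le_inv in H.
  pose proof (sq_pos z). pose proof (sq_gt z). apply abs_lt_inv in H1.
  assert (-1 < z / sq z < 1).
  { split; apply (Rmult_lt_reg_r (sq z)); auto; unfold Rdiv; rewrite Rmult_assoc, Rinv_l by lra; lra. }
  lra. Qed.
Lemma sp2_eq z : sp2 z = / (2 * (sq z * sq z * sq z)).
Proof. unfold sp2. pose proof (sq_ne z). pose proof (sq_sq z).
  replace (sq z - z * (z / sq z)) with ((sq z * sq z - z * z) / sq z) by (field; auto).
  rewrite H0. pose proof (pos1 z). field; repeat split; auto; lra. Qed.
Lemma ddq_eq z : ddq z = / (sq z * sq z * sq z).
Proof. unfold ddq. pose proof (sq_ne z). pose proof (sq_sq z).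
  replace (sq z - z * (z / sq z)) with ((sq z * sq z - z * z) / sq z) by (field; auto).
  rewrite H0. pose proof (pos1 z). field; repeat split; auto; lra. Qed.
Lemma sp2_bounds z : 0 <= sp2 z <= 2 * sp1 z.
Proof. rewrite sp2_eq. unfold sp1. pose proof (sq_pos z). pose proof (sq_sq z).
  pose proof (sq_gt z). apply abs_lt_inv in H1. pose proof (sq_ge1 z).
  set (r := sq z) in *.
  assert (E : 2 * ((1 + z / r) / 2) = (r + z) / r) by (field; lra). rewrite E.
  assert (0 < r * r * r) by (apply Rmult_lt_0_compat; [apply Rmult_lt_0_compat|]; lra).
  split. left. apply Rinv_0_lt_compat. lra.
  assert (Hk : 1 <= (r + z) * (2 * r)) by nra.
  apply (Rmult_le_reg_r (2 * (r*r*r))). lra.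
  rewrite Rinv_l by lra. unfold Rdiv.
  replace ((r + z) * / r * (2 * (r * r * r))) with ((r + z) * (2 * r) * r) by (field; lra). nra. Qed.
Lemma ddq_bounds z : 0 < ddq z <= 1.
Proof. rewrite ddq_eq. pose proof (sq_ge1 z). set (r := sq z) in *.
  assert (1 <= r * r * r) by nra. split. apply Rinv_0_lt_compat; lra.
  rewrite <- Rinv_1. apply Rinv_le_contravar; lra. Qed.

Lemma chi_pen S K R KF e x t : 0 <= KF -> K = KF + 1 -> 0 <= S -> 0 <= e <= 1/4 ->
  KF * Rabs (chix S K R x t) + e * chixx S K R x t <= chit S K R x t /\ 0 <= chixx S K R x t.
Proof.
  intros HKF HK HS He. unfold chix, chixx, chit.
  set (z := sq x + K * t - R).
  pose proof (sp1_bounds z). pose proof (sp2_bounds z). pose proof (ddq_bounds x).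
  pose proof (dq_bound x). pose proof (Rabs_pos (dq x)).
  assert (Hd2 : dq x * dq x <= 1).
  { rewrite <- (Rabs_pos_eq (dq x * dq x)) by nra. rewrite Rabs_mult. nra. }
  assert (Hxx : 0 <= sp2 z * dq x * dq x + sp1 z * ddq x <= 3 * sp1 z).
  { split. assert (0 <= dq x * dq x) by nra. nra. nra. }
  rewrite !Rabs_mult. rewrite (Rabs_pos_eq S) by auto. rewrite (Rabs_pos_eq (sp1 z)) by lra.
  split; [|nra].
  assert (S * sp1 z * Rabs (dq x) <= S * sp1 z) by (assert (0 <= S * sp1 z) by nra; nra).
  assert (e * (S * (sp2 z * dq x * dq x + sp1 z * ddq x)) <= 3/4 * (S * sp1 z)).
  { set (X := sp2 z * dq x * dq x + sp1 z * ddq x) in *.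
    assert (0 <= S * X <= S * (3 * sp1 z)) by (split; [apply Rmult_le_pos|apply Rmult_le_compat_l]; lra).
    assert (e * (S * X) <= 1/4 * (S * X)) by (apply Rmult_le_compat_r; lra). lra. }
  subst K. nra.
Qed.

Lemma sp_ge z : z <= sp z.
Proof. unfold sp. pose proof (sq_gt z). pose proof (Rle_abs z). lra. Qed.
Lemma sp_pos z : 0 < sp z.
Proof. unfold sp. pose proof (sq_gt z). apply abs_lt_inv in H. lra. Qed.
Lemma sp_small z : z < 0 -> sp z * (-4 * z) <= 1.
Proof. intros Hz. unfold sp. pose proof (sq_sq z). pose proof (sq_gt z). apply abs_lt_inv in H0.
  set (r := sq z) in *. assert ((r + z) * (r - z) = 1) by nra. nra. Qed.
Lemma sq_lip z w : Rabs (sq z - sq w) <= Rabs (z - w).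
Proof. unfold sq. apply sqrt_lip. lra. Qed.
Lemma sp_lip z w : Rabs (sp z - sp w) <= Rabs (z - w).
Proof. unfold sp. replace ((z + sq z) / 2 - (w + sq w) / 2) with (((z - w) + (sq z - sq w))/2) by field.
  unfold Rdiv. rewrite Rabs_mult. rewrite (Rabs_pos_eq (/2)) by lra.
  pose proof (Rabs_triang (z-w) (sq z - sq w)). pose proof (sq_lip z w). lra. Qed.

Lemma chi_ge S K R x t : 1 <= K -> 0 <= S -> 0 <= t -> S * (Rabs x + t - R) <= chi S K R x t.
Proof. intros HK HS Ht. unfold chi. pose proof (sp_ge (sq x + K * t - R)).
  pose proof (sq_gt x). apply Rmult_le_compat_l; auto. nra. Qed.
Lemma chi_nonneg S K R x t : 0 <= S -> 0 <= chi S K R x t.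
Proof. intros. unfold chi. pose proof (sp_pos (sq x + K*t - R)). nra. Qed.
Lemma chi_lip S K R x t s : 0 <= S -> 0 <= K -> Rabs (chi S K R x t - chi S K R x s) <= S * K * Rabs (t - s).
Proof. intros. unfold chi. rewrite <- Rmult_minus_distr_l, Rabs_mult, Rabs_pos_eq by auto.
  rewrite Rmult_assoc. apply Rmult_le_compat_l; auto.
  eapply Rle_trans. apply sp_lip.
  replace (sq x + K * t - R - (sq x + K * s - R)) with (K * (t - s)) by ring.
  rewrite Rabs_mult, Rabs_pos_eq by auto. lra. Qed.


Lemma c_plus (p : R * R) (f g : R * R -> R) : continuous f p -> continuous g p -> continuous (fun q => f q + g q) p.
Proof. intros. apply (continuous_plus f g); auto. Qed.
Lemma c_mult (p : R * R) (f g : R * R -> R) : continuous f p -> continuous g p -> continuous (fun q => f q * g q) p.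
Proof. intros. apply (continuous_mult f g); auto. Qed.
Lemma c_opp (p : R * R) (f : R * R -> R) : continuous f p -> continuous (fun q => - f q) p.
Proof. intros. apply (continuous_opp f); auto. Qed.
Lemma c_minus (p : R * R) (f g : R * R -> R) : continuous f p -> continuous g p -> continuous (fun q => f q - g q) p.
Proof. intros. unfold Rminus. apply c_plus; auto. apply c_opp; auto. Qed.
Lemma c_const (p : R * R) (k : R) : continuous (fun _ : R * R => k) p.
Proof. apply continuous_const. Qed.
Lemma c_fst (p : R * R) : continuous (fun q : R * R => fst q) p.
Proof. destruct p. apply continuous_fst. Qed.
Lemma c_snd (p : R * R) : continuous (fun q : R * R => snd q) p.
Proof. destruct p. apply continuous_snd. Qed.
Lemma c_sqrt (p : R * R) (f : R * R -> R) : continuous f p -> continuous (fun q => sqrt (f q)) p.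
Proof. intros. apply (continuous_comp f sqrt); auto. apply continuous_sqrt. Qed.
Lemma c_inv (p : R * R) (f : R * R -> R) : continuous f p -> f p <> 0 -> continuous (fun q => / f q) p.
Proof. intros. apply (continuous_comp f Rinv); auto. apply continuous_Rinv. auto. Qed.
Lemma c_div (p : R * R) (f g : R * R -> R) : continuous f p -> continuous g p -> g p <> 0 -> continuous (fun q => f q / g q) p.
Proof. intros. unfold Rdiv. apply c_mult; auto. apply c_inv; auto. Qed.
Lemma c_sq (p : R * R) (f : R * R -> R) : continuous f p -> continuous (fun q => sq (f q)) p.
Proof. intros. unfold sq. apply c_sqrt. apply c_plus; [apply c_mult|apply c_const]; auto. Qed.

Ltac cont1 := match goal with
 | |- continuous (fun _ => ?k) _ => apply c_const
 | |- continuous (fun q => fst q) _ => apply c_fst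
 | |- continuous (fun q => snd q) _ => apply c_snd
 | |- continuous (fun q => @?a q - @?b q) _ => apply (c_minus _ a b)
 | |- continuous (fun q => @?a q + @?b q) _ => apply (c_plus _ a b)
 | |- continuous (fun q => @?a q * @?b q) _ => apply (c_mult _ a b)
 | |- continuous (fun q => @?a q / @?b q) _ => apply (c_div _ a b)
 | |- continuous (fun q => - @?a q) _ => apply (c_opp _ a)
 | |- continuous (fun q => / @?a q) _ => apply (c_inv _ a)
 | |- continuous (fun q => sq (@?a q)) _ => apply (c_sq _ a)
 | |- continuous (fun q => sqrt (@?a q)) _ => apply (c_sqrt _ a)
 end.
Ltac cont := repeat cont1.

Lemma cont2_chi S K R : cont2 (chi S K R) /\ cont2 (chit S K R) /\ cont2 (chix S K R) /\ cont2 (chixx S K R).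
Proof.
  repeat split; apply cont2_of; intros x t;
  unfold chi, chit, chix, chixx, sp, sp1, sp2, dq, ddq; cont; simpl; try lra; repeat apply Rmult_integral_contrapositive_currified; apply sq_ne.
Qed.


Definition Yv P x t := x - P * t + P.
Definition psi m c P Q eta d x t :=
  m * (x - P * t) - Q * t + eta * t + c * sqrt (Yv P x t * Yv P x t + d).
Definition psit m c P Q eta d x t :=
  - (m * P) - Q + eta + c * (Yv P x t / sqrt (Yv P x t * Yv P x t + d)) * (- P).
Definition psix m c P (Q eta : R) d x t :=
  m + c * (Yv P x t / sqrt (Yv P x t * Yv P x t + d)).

Lemma sqd_pos y d : 0 < d -> 0 < sqrt (y * y + d).
Proof. intros. apply sqrt_lt_R0. nra. Qed.

Lemma pos_d y d : 0 < d -> 0 < y * y + d.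
Proof. intros. nra. Qed.

Lemma ratio_bound y d : 0 <= d -> 0 < sqrt (y*y+d) -> Rabs (y / sqrt (y*y+d)) <= 1.
Proof. intros Hd Hp.
  assert (Rabs y <= sqrt (y*y+d)).
  { pose proof (sqrt_sqrt (y*y+d)). assert (Rabs y * Rabs y = y * y) by (rewrite <- Rabs_mult; apply Rabs_pos_eq; nra).
    pose proof (Rabs_pos y). assert (sqrt (y * y + d) * sqrt (y * y + d) = y*y+d) by (apply H; nra). nra. }
  unfold Rdiv. rewrite Rabs_mult, Rabs_inv, (Rabs_pos_eq (sqrt _)) by lra.
  apply (Rmult_le_reg_r (sqrt (y*y+d))); auto. rewrite Rmult_assoc, Rinv_l by lra. lra. Qed.

Lemma D_psi_t m c P Q eta d x t : 0 < d ->
  is_derive (fun s => psi m c P Q eta d x s) t (psit m c P Q eta d x t).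
Proof. intros Hd. unfold psi, psit, Yv. auto_derive.
  - repeat split; try apply pos_d; auto.
  - pose proof (sqd_pos (x - P * t + P) d Hd). unfold Rminus in *. field. lra.
Qed.

Lemma D_psi_x m c P Q eta d x t : 0 < d ->
  is_derive (fun y => psi m c P Q eta d y t) x (psix m c P Q eta d x t).
Proof. intros Hd. unfold psi, psix, Yv. auto_derive.
  - repeat split; try apply pos_d; auto.
  - pose proof (sqd_pos (x - P * t + P) d Hd). unfold Rminus in *. field. lra.
Qed.

Lemma cont2_psi m c P Q eta d : 0 < d ->
  cont2 (psi m c P Q eta d) /\ cont2 (psit m c P Q eta d) /\ cont2 (psix m c P Q eta d).
Proof. intros Hd.
  repeat split; apply cont2_of; intros x t; unfold psi, psit, psix, Yv; cont; simpl;
  apply Rgt_not_eq; apply sqd_pos; auto.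
Qed.

Lemma psi_eq m c P Q eta d x t : psit m c P Q eta d x t + (P * psix m c P Q eta d x t + Q) = eta.
Proof. unfold psit, psix. ring. Qed.

Lemma psix_range m c P Q eta d x t : 0 < d -> 0 <= c ->
  m - c <= psix m c P Q eta d x t <= m + c.
Proof. intros Hd Hc. unfold psix. pose proof (ratio_bound (Yv P x t) d (Rlt_le _ _ Hd) (sqd_pos _ _ Hd)).
  apply abs_le_inv in H. split; nra. Qed.

Lemma sqrt_le_of y B : 0 <= y -> 0 <= B -> y <= B * B -> sqrt y <= B.
Proof. intros. rewrite <- (sqrt_square B) by auto. apply sqrt_le_1; nra. Qed.

Lemma sqrt_sum_le y e : 0 <= e -> sqrt (y*y + e) <= Rabs y + sqrt e.
Proof. intros He. pose proof (sqrt_pos e). pose proof (sqrt_sqrt e He). pose proof (Rabs_pos y).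
  assert (Rabs y * Rabs y = y * y) by (rewrite <- Rabs_mult; apply Rabs_pos_eq; nra).
  apply sqrt_le_of; nra. Qed.

Lemma abs_le_sqrt y e : 0 <= e -> Rabs y <= sqrt (y*y + e).
Proof. intros He. pose proof (Rabs_pos y).
  assert (Rabs y * Rabs y = y * y) by (rewrite <- Rabs_mult; apply Rabs_pos_eq; nra).
  rewrite <- (sqrt_square (Rabs y)) by auto. apply sqrt_le_1; nra. Qed.

Lemma psi_init m c P Q eta d x : 0 < d -> 0 <= c ->
  m * x + c * Rabs (x + P) <= psi m c P Q eta d x 0.
Proof. intros. unfold psi, Yv. replace (x - P * 0 + P) with (x + P) by ring.
  pose proof (abs_le_sqrt (x + P) d (Rlt_le _ _ H)). nra. Qed.

Lemma psi_01 m c P Q eta d : 0 < d ->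
  psi m c P Q eta d 0 1 = - (m * P) - Q + eta + c * sqrt d.
Proof. intros. unfold psi, Yv. replace (0 - P * 1 + P) with 0 by ring.
  replace (0 * 0 + d) with d by ring. ring. Qed.

Lemma psi_lower m c P Q eta d x t : 0 < d -> 0 <= c -> 0 <= eta -> 0 <= t ->
  m * (x - P * t) - Q * t <= psi m c P Q eta d x t.
Proof. intros. unfold psi. pose proof (sqrt_pos (Yv P x t * Yv P x t + d)). nra. Qed.

Lemma psi_lip m c P Q eta d x t s : 0 < d -> 0 <= c ->
  Rabs (psi m c P Q eta d x t - psi m c P Q eta d x s) <=
  (Rabs (- (m * P) - Q + eta) + c * Rabs P) * Rabs (t - s).
Proof. intros. unfold psi.
  replace (m * (x - P * t) - Q * t + eta * t + c * sqrt (Yv P x t * Yv P x t + d) -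
    (m * (x - P * s) - Q * s + eta * s + c * sqrt (Yv P x s * Yv P x s + d))) with
    ((- (m * P) - Q + eta) * (t - s) + c * (sqrt (Yv P x t * Yv P x t + d) - sqrt (Yv P x s * Yv P x s + d))) by ring.
  eapply Rle_trans. apply Rabs_triang. rewrite !Rabs_mult. rewrite (Rabs_pos_eq c) by auto.
  pose proof (sqrt_lip (Yv P x t) (Yv P x s) d (Rlt_le _ _ H)).
  replace (Yv P x t - Yv P x s) with (- P * (t - s)) in H1 by (unfold Yv; ring).
  rewrite Rabs_mult, Rabs_Ropp in H1. pose proof (Rabs_pos (t - s)). pose proof (Rabs_pos P). nra. Qed.


Definition hh t := t + sq t.
Definition Sv e t := e * hh t.
Definition phB m c P Q eta e x t :=
  m * (x - P * t) - Q * t - eta * t - c * sqrt e / 2 +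
  c * (sqrt (Yv P x t * Yv P x t + Sv e t) - sqrt (Sv e t) / 2).
Definition phBt m c P Q eta e x t :=
  - (m * P) - Q - eta +
  c * (((- P) * Yv P x t + Yv P x t * (- P) + e * (1 + dq t)) / (2 * sqrt (Yv P x t * Yv P x t + Sv e t))
       - e * (1 + dq t) / (2 * sqrt (Sv e t)) / 2).
Definition phBx m c P (Q eta : R) e x t :=
  m + c * (Yv P x t / sqrt (Yv P x t * Yv P x t + Sv e t)).
Definition phBxx (m : R) c P (Q eta : R) e x t :=
  c * ((sqrt (Yv P x t * Yv P x t + Sv e t) - Yv P x t * (Yv P x t / sqrt (Yv P x t * Yv P x t + Sv e t)))
       / (sqrt (Yv P x t * Yv P x t + Sv e t) * sqrt (Yv P x t * Yv P x t + Sv e t))).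

Lemma hh_pos t : 0 < t + sqrt (t * t + 1).
Proof. pose proof (sq_gt t). unfold sq in H. apply abs_lt_inv in H. lra. Qed.
Lemma Sv_pos' e t : 0 < e -> 0 < e * (t + sqrt (t * t + 1)).
Proof. intros. apply Rmult_lt_0_compat; auto. apply hh_pos. Qed.
Lemma A_pos' e t y : 0 < e -> 0 < y * y + e * (t + sqrt (t * t + 1)).
Proof. intros. pose proof (Sv_pos' e t H). nra. Qed.
Lemma sqrt_ne a : 0 < a -> sqrt a <> 0.
Proof. intros. apply Rgt_not_eq. apply sqrt_lt_R0. auto. Qed.

Ltac nz e := apply sqrt_ne; first [ (apply (A_pos' e); assumption) | (apply (Sv_pos' e); assumption) | apply pos1 ].
Ltac side e := repeat split; first [ nz e | (apply (A_pos' e); assumption) | (apply (Sv_pos' e); assumption) | apply pos1 | assumption ].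

Lemma D_phB_t m c P Q eta e x t : 0 < e ->
  is_derive (fun s => phB m c P Q eta e x s) t (phBt m c P Q eta e x t).
Proof. intros He. unfold phB, phBt, Yv, Sv, hh, dq, sq. auto_derive; unfold Rminus in *.
  all: try (field; repeat split).
  all: try (nz e).
  all: try (side e).
Qed.

Lemma D_phB_x m c P Q eta e x t : 0 < e ->
  is_derive (fun y => phB m c P Q eta e y t) x (phBx m c P Q eta e x t).
Proof. intros He. unfold phB, phBx, Yv, Sv, hh, dq, sq. auto_derive; unfold Rminus in *.
  all: try (field; repeat split).
  all: try (nz e).
  all: try (side e).
Qed.

Lemma D_phBx_x m c P Q eta e x t : 0 < e ->
  is_derive (fun y => phBx m c P Q eta e y t) x (phBxx m c P Q eta e x t).
Proof. intros He. unfold phBxx, phBx, Yv, Sv, hh, dq, sq. auto_derive; unfold Rminus in *.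
  all: try (field; repeat split).
  all: try (nz e).
  all: try (side e).
Qed.

Lemma cont2_phB m c P Q eta e : 0 < e ->
  cont2 (phB m c P Q eta e) /\ cont2 (phBt m c P Q eta e) /\ cont2 (phBx m c P Q eta e)
  /\ cont2 (phBxx m c P Q eta e).
Proof. intros He.
  repeat split; apply cont2_of; intros x t; unfold phB, phBt, phBx, phBxx, Yv, Sv, hh, dq, sq; cont; simpl;
  try lra; repeat apply Rmult_integral_contrapositive_currified; try lra; nz e.
Qed.

Lemma keyB a r Y k : 0 < a -> 0 < r -> r * r = Y * Y + a * a -> 0 <= k <= 2 ->
  k / (2 * r) - k / (2 * a) / 2 - (r - Y * (Y / r)) / (r * r) <= 0.
Proof. intros Ha Hr E Hk.
  assert (E2 : (r - Y * (Y / r)) / (r * r) = a * a / (r * r * r)).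
  { replace (r - Y * (Y / r)) with ((r * r - Y * Y) / r) by (field; repeat split; lra).
    rewrite E. field. split; [lra|nra]. }
  rewrite E2.
  assert (Hra : a <= r) by nra.
  assert (0 < r * r * r) by (apply Rmult_lt_0_compat; [apply Rmult_lt_0_compat|]; lra).
  assert (E3 : k / (2 * r) - k / (2 * a) / 2 - a * a / (r * r * r) =
     (k * (r * r) * (2 * a - r) - 4 * (a * a * a)) / (4 * a * (r * r * r))) by (field; repeat split; lra).
  rewrite E3. unfold Rdiv. apply Rmult_le_0_r.
  2: { left. apply Rinv_0_lt_compat. apply Rmult_lt_0_compat; lra. }
  assert (0 < a * a * a) by (apply Rmult_lt_0_compat; [apply Rmult_lt_0_compat|]; lra).
  destruct (Rle_dec r (2 * a)) as [L|L].
  - assert (H1 : 0 <= r * (r - a) * (r - a)) by (apply Rmult_le_pos; [apply Rmult_le_pos|]; lra).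
    assert (H2 : 0 <= a * a * (2 * a - r)) by (apply Rmult_le_pos; nra).
    assert (H3 : r * r * (2 * a - r) <= 2 * (a * a * a)) by nra.
    assert (H4 : k * (r * r * (2 * a - r)) <= 2 * (r * r * (2 * a - r))).
    { apply Rmult_le_compat_r; [|lra]. apply Rmult_le_pos; nra. }
    nra.
  - assert (k * (r * r) * (2 * a - r) <= 0).
    { rewrite Rmult_comm. apply Rmult_le_0_r; [lra | apply Rmult_le_pos; nra]. }
    nra.
Qed.

Lemma dq_range t : 0 <= 1 + dq t <= 2.
Proof. pose proof (dq_bound t). apply abs_le_inv in H. lra. Qed.

Lemma Sv_pos e t : 0 < e -> 0 < Sv e t.
Proof. intros. unfold Sv, hh, sq. apply Sv_pos'. auto. Qed.

Lemma phB_eq m c P Q eta e x t : 0 <= c -> 0 < e ->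
  phBt m c P Q eta e x t + (P * phBx m c P Q eta e x t + Q) - e * phBxx m c P Q eta e x t <= - eta.
Proof. intros Hc He. unfold phBt, phBx, phBxx.
  set (Y := Yv P x t). set (S := Sv e t). set (k := 1 + dq t).
  assert (HS : 0 < S) by (apply Sv_pos; auto).
  set (a := sqrt S). set (r := sqrt (Y * Y + S)).
  assert (Ha : 0 < a) by (apply sqrt_lt_R0; auto).
  assert (Hr : 0 < r) by (apply sqrt_lt_R0; nra).
  assert (Er : r * r = Y * Y + a * a).
  { unfold r, a. rewrite !sqrt_sqrt; nra. }
  pose proof (keyB a r Y k Ha Hr Er (dq_range t)).
  assert (E : - (m * P) - Q - eta + c * ((- P * Y + Y * - P + e * k) / (2 * r) - e * k / (2 * a) / 2) +
    (P * (m + c * (Y / r)) + Q) - e * (c * ((r - Y * (Y / r)) / (r * r))) =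
    - eta + c * e * (k / (2 * r) - k / (2 * a) / 2 - (r - Y * (Y / r)) / (r * r))) by (field; repeat split; lra).
  rewrite E. assert (0 <= c * e) by nra. nra.
Qed.

Lemma phBx_range m c P Q eta e x t : 0 <= c -> 0 < e -> m - c <= phBx m c P Q eta e x t <= m + c.
Proof. intros Hc He. unfold phBx. pose proof (Sv_pos e t He).
  pose proof (ratio_bound (Yv P x t) (Sv e t) (Rlt_le _ _ H) (sqd_pos _ _ H)).
  apply abs_le_inv in H0. split; nra. Qed.

Lemma hh0 : hh 0 = 1.
Proof. unfold hh, sq. replace (0 * 0 + 1) with 1 by ring. rewrite sqrt_1. ring. Qed.

Lemma phB_init m c P Q eta e x : 0 <= c -> 0 < e ->
  phB m c P Q eta e x 0 <= m * x + c * Rabs (x + P).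
Proof. intros Hc He. unfold phB, Sv, Yv. rewrite hh0.
  replace (x - P * 0 + P) with (x + P) by ring. replace (e * 1) with e by ring.
  pose proof (sqrt_sum_le (x + P) e (Rlt_le _ _ He)). nra. Qed.

Lemma phB_01 m c P Q eta e : 0 <= c -> 0 < e ->
  - (m * P) - Q - eta + c * sqrt e / 4 <= phB m c P Q eta e 0 1.
Proof. intros Hc He. unfold phB, Yv. replace (0 - P * 1 + P) with 0 by ring.
  replace (0 * 0 + Sv e 1) with (Sv e 1) by ring.
  assert (Hh : 9/4 <= hh 1).
  { unfold hh, sq. replace (1 * 1 + 1) with 2 by ring.
    assert (5/4 <= sqrt 2). { rewrite <- (sqrt_square (5/4)) by lra. apply sqrt_le_1; lra. } lra. }
  assert (3/2 * sqrt e <= sqrt (Sv e 1)).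
  { unfold Sv. rewrite sqrt_mult by lra. replace (3/2) with (sqrt (9/4)).
    rewrite Rmult_comm. apply Rmult_le_compat_l. apply sqrt_pos. apply sqrt_le_1; lra.
    replace (9/4) with ((3/2)*(3/2)) by field. rewrite sqrt_square; lra. }
  nra. Qed.

Lemma sq_le t : 0 <= t -> sq t <= t + 1.
Proof. intros. unfold sq. apply sqrt_le_of; nra. Qed.
Lemma hh_ge1 t : 0 <= t -> 1 <= hh t.
Proof. intros. unfold hh. pose proof (sq_ge1 t). lra. Qed.

Lemma phB_upper m c P Q eta e x t : 0 <= c -> 0 < e <= 1 -> 0 <= eta -> 0 <= t ->
  phB m c P Q eta e x t <= (Rabs m + c) * Rabs x + (Rabs (m * P) + Rabs Q + c * Rabs P + 2 * c) * t + c * (Rabs P + 2).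
Proof. intros Hc He Heta Ht. unfold phB.
  pose proof (Sv_pos e t (proj1 He)) as HS.
  pose proof (sqrt_sum_le (Yv P x t) (Sv e t) (Rlt_le _ _ HS)).
  pose proof (sqrt_pos (Sv e t)). pose proof (sqrt_pos e).
  assert (Hs : sqrt (Sv e t) <= 2 * t + 2).
  { apply sqrt_le_of; try lra. unfold Sv. pose proof (hh_ge1 t Ht). unfold hh in *.
    pose proof (sq_le t Ht). nra. }
  assert (HY : Rabs (Yv P x t) <= Rabs x + Rabs P * t + Rabs P).
  { unfold Yv. pose proof (Rabs_triang (x - P * t) P) as H3. pose proof (Rabs_triang x (- (P * t))) as H4.
    rewrite Rabs_Ropp, Rabs_mult, (Rabs_pos_eq t) in H4 by auto. unfold Rminus in *. lra. }
  assert (G1 : m * x <= Rabs m * Rabs x) by (rewrite <- Rabs_mult; apply Rle_abs).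
  assert (G2 : - (m * P) * t <= Rabs (m * P) * t).
  { apply Rmult_le_compat_r; auto. rewrite <- Rabs_Ropp. apply Rle_abs. }
  assert (G3 : - Q * t <= Rabs Q * t).
  { apply Rmult_le_compat_r; auto. rewrite <- Rabs_Ropp. apply Rle_abs. }
  assert (G4 : c * sqrt (Yv P x t * Yv P x t + Sv e t) <= c * (Rabs x + Rabs P * t + Rabs P) + c * (2 * t + 2)).
  { rewrite <- Rmult_plus_distr_l. apply Rmult_le_compat_l; auto. lra. }
  assert (0 <= eta * t) by nra. assert (0 <= c * sqrt e) by nra. assert (0 <= c * sqrt (Sv e t)) by nra.
  replace (m * (x - P * t)) with (m * x + - (m * P) * t) by ring.
  nra.
Qed.

Lemma sqrt_diff A B e : 0 < e -> e <= A -> e <= B -> Rabs (sqrt A - sqrt B) <= Rabs (A - B) / (2 * sqrt e).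
Proof. intros He HA HB.
  pose proof (sqrt_le_1_alt e A HA). pose proof (sqrt_le_1_alt e B HB).
  pose proof (sqrt_lt_R0 e He).
  assert (E : sqrt A - sqrt B = (A - B) / (sqrt A + sqrt B)).
  { apply (Rmult_eq_reg_r (sqrt A + sqrt B)); [|lra]. unfold Rdiv.
    rewrite Rmult_assoc, Rinv_l, Rmult_1_r by lra.
    replace ((sqrt A - sqrt B) * (sqrt A + sqrt B)) with (sqrt A * sqrt A - sqrt B * sqrt B) by ring.
    rewrite !sqrt_sqrt by lra. auto. }
  rewrite E. unfold Rdiv. rewrite Rabs_mult, Rabs_inv, (Rabs_pos_eq (sqrt A + sqrt B)) by lra.
  apply Rmult_le_compat_l. apply Rabs_pos. apply Rinv_le_contravar; lra.
Qed.

Lemma Sv_ge e t : 0 < e -> 0 <= t -> e <= Sv e t.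
Proof. intros. unfold Sv. pose proof (hh_ge1 t H0). nra. Qed.

Lemma Sv_lip e t s : 0 < e -> Rabs (Sv e t - Sv e s) <= 2 * e * Rabs (t - s).
Proof. intros. unfold Sv, hh. replace (e * (t + sq t) - e * (s + sq s)) with (e * ((t - s) + (sq t - sq s))) by ring.
  rewrite Rabs_mult, Rabs_pos_eq by lra. pose proof (Rabs_triang (t - s) (sq t - sq s)).
  pose proof (sq_lip t s). nra. Qed.

Lemma tri3 A B C : Rabs (A + B - C / 2) <= Rabs A + Rabs B + Rabs C / 2.
Proof. unfold Rabs; repeat destruct Rcase_abs; lra. Qed.

Lemma phB_lip m c P Q eta e x t s : 0 <= c -> 0 < e -> 0 <= t -> 0 <= s ->
  Rabs (phB m c P Q eta e x t - phB m c P Q eta e x s) <=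
  (Rabs (- (m * P) - Q - eta) + c * (Rabs P + 2 * sqrt e)) * Rabs (t - s).
Proof. intros Hc He Ht Hs. unfold phB.
  set (Yt := Yv P x t). set (Ys := Yv P x s). set (St := Sv e t). set (Ss := Sv e s).
  assert (HSt : e <= St) by (apply Sv_ge; auto). assert (HSs : e <= Ss) by (apply Sv_ge; auto).
  pose proof (sqrt_lt_R0 e He) as Hse.
  assert (Hsl : Rabs (St - Ss) / (2 * sqrt e) <= sqrt e * Rabs (t - s)).
  { pose proof (Sv_lip e t s He). fold St Ss in H.
    apply (Rmult_le_reg_r (2 * sqrt e)). lra. unfold Rdiv. rewrite Rmult_assoc, Rinv_l, Rmult_1_r by lra.
    replace (sqrt e * Rabs (t - s) * (2 * sqrt e)) with (2 * (sqrt e * sqrt e) * Rabs (t - s)) by ring.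
    rewrite sqrt_sqrt by lra. lra. }
  assert (H1 : Rabs (sqrt (Yt * Yt + St) - sqrt (Ys * Ys + St)) <= Rabs P * Rabs (t - s)).
  { eapply Rle_trans. apply sqrt_lip. lra. unfold Yt, Ys, Yv.
    replace (x - P * t + P - (x - P * s + P)) with (- P * (t - s)) by ring.
    rewrite Rabs_mult, Rabs_Ropp. lra. }
  assert (H2 : Rabs (sqrt (Ys * Ys + St) - sqrt (Ys * Ys + Ss)) <= sqrt e * Rabs (t - s)).
  { assert (0 <= Ys * Ys) by nra.
    eapply Rle_trans. apply (sqrt_diff _ _ e); auto; lra.
    replace (Ys * Ys + St - (Ys * Ys + Ss)) with (St - Ss) by ring. auto. }
  assert (H3 : Rabs (sqrt St - sqrt Ss) <= sqrt e * Rabs (t - s)).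
  { eapply Rle_trans. apply (sqrt_diff _ _ e); auto. auto. }
  clearbody Yt Ys St Ss.
  replace (m * (x - P * t) - Q * t - eta * t - c * sqrt e / 2 + c * (sqrt (Yt * Yt + St) - sqrt St / 2) -
    (m * (x - P * s) - Q * s - eta * s - c * sqrt e / 2 + c * (sqrt (Ys * Ys + Ss) - sqrt Ss / 2)))
   with ((- (m * P) - Q - eta) * (t - s) + c * ((sqrt (Yt * Yt + St) - sqrt (Ys * Ys + St)) +
      (sqrt (Ys * Ys + St) - sqrt (Ys * Ys + Ss)) - (sqrt St - sqrt Ss) / 2)) by field.
  eapply Rle_trans. apply Rabs_triang. rewrite !Rabs_mult, (Rabs_pos_eq c) by auto.
  assert (Rabs ((sqrt (Yt * Yt + St) - sqrt (Ys * Ys + St)) +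
      (sqrt (Ys * Ys + St) - sqrt (Ys * Ys + Ss)) - (sqrt St - sqrt Ss) / 2) <=
      (Rabs P + 2 * sqrt e) * Rabs (t - s)).
  { eapply Rle_trans. apply tri3. pose proof (Rabs_pos (t - s)). nra. }
  pose proof (Rabs_pos (t - s)). nra.
Qed.


Lemma cont2_plus f g : cont2 f -> cont2 g -> cont2 (fun x t => f x t + g x t).
Proof. intros Hf Hg x t e He. destruct (Hf x t (e/2)) as [d1 [Hd1 H1]]. lra.
  destruct (Hg x t (e/2)) as [d2 [Hd2 H2]]. lra.
  exists (Rmin d1 d2). split. apply Rmin_pos; auto.
  intros y s Hy Hs. pose proof (Rmin_l d1 d2). pose proof (Rmin_r d1 d2).
  specialize (H1 y s ltac:(lra) ltac:(lra)). specialize (H2 y s ltac:(lra) ltac:(lra)).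
  replace (f y s + g y s - (f x t + g x t)) with ((f y s - f x t) + (g y s - g x t)) by ring.
  eapply Rle_lt_trans. apply Rabs_triang. lra. Qed.

Lemma cont2_minus f g : cont2 f -> cont2 g -> cont2 (fun x t => f x t - g x t).
Proof. intros Hf Hg x t e He. destruct (Hf x t (e/2)) as [d1 [Hd1 H1]]. lra.
  destruct (Hg x t (e/2)) as [d2 [Hd2 H2]]. lra.
  exists (Rmin d1 d2). split. apply Rmin_pos; auto.
  intros y s Hy Hs. pose proof (Rmin_l d1 d2). pose proof (Rmin_r d1 d2).
  specialize (H1 y s ltac:(lra) ltac:(lra)). specialize (H2 y s ltac:(lra) ltac:(lra)).
  replace (f y s - g y s - (f x t - g x t)) with ((f y s - f x t) - (g y s - g x t)) by ring.
  eapply Rle_lt_trans. apply Rabs_triang. rewrite Rabs_Ropp. lra. Qed.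

Lemma u_cont_x u t x : cont_closed_half u -> 0 <= t -> continuity_pt (fun y => u y t) x.
Proof. intros H Ht. apply cont_pt_eps. intros e He. destruct (H x t e Ht He) as [d [Hd H']].
  exists d. split; auto. intros y Hy. apply H'; auto. rewrite Rminus_diag, Rabs_R0. auto. Qed.

Lemma equi_gen (Phi u f : R -> R -> R) Lf : sol_class u -> 0 <= Lf ->
  (forall x t s, 0 <= t -> 0 <= s -> Rabs (f x t - f x s) <= Lf * Rabs (t - s)) ->
  (forall x t s, Rabs (Phi x t - Phi x s) <= Rabs (u x t - u x s) + Rabs (f x t - f x s)) ->
  forall e, 0 < e -> exists d, 0 < d /\ forall x t s, 0 <= t -> 0 <= s -> Rabs (t - s) < d ->
     Rabs (Phi x t - Phi x s) <= e.
Proof. intros [Huc _] HL Hf HP e He.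
  destruct (Huc (e/2)) as [d1 [Hd1 H1]]. lra.
  set (d2 := e / (2 * (Lf + 1))). assert (Hd2 : 0 < d2) by (unfold d2; apply Rdiv_lt_0_compat; lra).
  exists (Rmin d1 d2). split. apply Rmin_pos; auto.
  intros x t s Ht Hs Hts. pose proof (Rmin_l d1 d2). pose proof (Rmin_r d1 d2).
  assert (A1 : Rabs (u x t - u x s) < e/2).
  { apply (H1 x x s t); auto. rewrite Rminus_diag, Rabs_R0; lra. lra. }
  assert (A2 : Lf * Rabs (t - s) <= e/2).
  { assert (Lf * Rabs (t - s) <= (Lf + 1) * d2).
    { pose proof (Rabs_pos (t - s)). apply Rmult_le_compat; lra. }
    unfold d2 in H2. replace ((Lf + 1) * (e / (2 * (Lf + 1)))) with (e/2) in H2 by (field; lra). lra. }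
  pose proof (HP x t s). pose proof (Hf x t s Ht Hs). lra.
Qed.


Lemma chix_bound S K R x t : 0 <= S -> Rabs (chix S K R x t) <= S.
Proof. intros HS. unfold chix. rewrite !Rabs_mult, (Rabs_pos_eq S) by auto.
  pose proof (sp1_bounds (sq x + K * t - R)). rewrite (Rabs_pos_eq (sp1 _)) by lra.
  pose proof (dq_bound x). pose proof (Rabs_pos (dq x)).
  set (a := sp1 (sq x + K * t - R)) in *. set (b := Rabs (dq x)) in *.
  assert (a * b <= 1) by nra. rewrite Rmult_assoc. nra. Qed.

Lemma chi_01 S K R : 0 < S -> 1 + K < R -> chi S K R 0 1 <= S / (4 * (R - 1 - K)).
Proof. intros HS HR. unfold chi. unfold sq. replace (0 * 0 + 1) with 1 by ring. rewrite sqrt_1.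
  pose proof (sp_small (1 + K * 1 - R) ltac:(lra)). pose proof (sp_pos (1 + K * 1 - R)).
  apply (Rmult_le_reg_r (4 * (R - 1 - K))). lra. replace (S / (4 * (R - 1 - K)) * (4 * (R - 1 - K))) with S by (field; lra).
  replace (S * sp (1 + K * 1 - R) * (4 * (R - 1 - K))) with (S * (sp (1 + K * 1 - R) * (-4 * (1 + K * 1 - R)))) by ring.
  nra. Qed.

Lemma lip_F F r L p q : (forall p q : R, Rabs p <= r -> Rabs q <= r -> Rabs (F p - F q) <= L * Rabs (p - q)) ->
  Rabs p <= r -> Rabs q <= r -> F q - Rmax 0 L * Rabs (p - q) <= F p <= F q + Rmax 0 L * Rabs (p - q).
Proof. intros H Hp Hq. specialize (H p q Hp Hq). apply abs_le_inv in H.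
  pose proof (Rmax_r 0 L). pose proof (Rabs_pos (p - q)).
  assert (L * Rabs (p - q) <= Rmax 0 L * Rabs (p - q)) by (apply Rmult_le_compat_r; auto). lra. Qed.

Theorem partA (F : R -> R) (a b P Q m c : R) (u : R -> R -> R) :
  loc_lipschitz F -> (forall p, a < p < b -> F p = P * p + Q) ->
  0 < c -> a < m - c -> m + c < b ->
  sol_class u -> visc_sol_HJ F u -> initial_datum u (fun x => m * x + c * Rabs (x + P)) ->
  u 0 1 <= - (m * P) - Q.
Proof.
  intros HF HPQ Hc Ha Hb Hsol [Hcont [Hsub _]] Hinit.
  apply Rle_plus_epsilon. intros err Herr.
  destruct (sol_growth u Hsol) as [B0 [HB0 HB]].
  set (S := B0 + Rabs m + Rabs (m * P) + Rabs Q + 1).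
  assert (HS : 1 <= S) by (unfold S; pose proof (Rabs_pos m); pose proof (Rabs_pos (m*P)); pose proof (Rabs_pos Q); lra).
  destruct (HF (Rabs m + c + S)) as [LF HLF].
  set (KF := Rmax 0 LF). assert (HKF : 0 <= KF) by apply Rmax_l.
  set (K := KF + 1).
  set (eta := err / 3). assert (Heta : 0 < eta) by (unfold eta; lra).
  set (dd := err / (3 * c)). assert (Hdd : 0 < dd) by (unfold dd; apply Rdiv_lt_0_compat; lra).
  set (d := dd * dd). assert (Hd : 0 < d) by (unfold d; nra).
  set (R := 1 + K + 3 * S / err).
  assert (HR : 1 + K < R) by (unfold R; assert (0 < 3 * S / err) by (apply Rdiv_lt_0_compat; lra); lra).
  set (ps := psi m c P Q eta d). set (ch := chi S K R).
  set (Phi := fun x t => u x t - (ps x t + ch x t)).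
  assert (Hps := cont2_psi m c P Q eta d Hd). destruct Hps as [Cps [Cpst Cpsx]].
  destruct (cont2_chi S K R) as [Cch [Ccht [Cchx Cchxx]]].
  assert (Hmain : Phi 0 1 <= 0).
  { apply compare.
    - intros t Ht x. unfold Phi. apply continuity_pt_minus. apply u_cont_x; auto.
      apply continuity_pt_plus; apply cont2_x; auto.
    - apply (equi_gen Phi u (fun x t => ps x t + ch x t)
         ((Rabs (- (m * P) - Q + eta) + c * Rabs P) + S * K)); auto.
      + pose proof (Rabs_pos (- (m * P) - Q + eta)). pose proof (Rabs_pos P). unfold K. nra.
      + intros x t s Ht Hs.
        replace (ps x t + ch x t - (ps x s + ch x s)) with ((ps x t - ps x s) + (ch x t - ch x s)) by ring.
        eapply Rle_trans. apply Rabs_triang.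
        pose proof (psi_lip m c P Q eta d x t s Hd (Rlt_le _ _ Hc)).
        pose proof (chi_lip S K R x t s ltac:(lra) ltac:(unfold K; lra)).
        unfold ps, ch. lra.
      + intros x t s. unfold Phi.
        replace (u x t - (ps x t + ch x t) - (u x s - (ps x s + ch x s))) with
          ((u x t - u x s) - (ps x t + ch x t - (ps x s + ch x s))) by ring.
        eapply Rle_trans. apply Rabs_triang. rewrite Rabs_Ropp. lra.
    - exists (u 0 0 + B0 + S * R). intros x t Ht. unfold Phi.
      specialize (HB x t Ht). apply abs_le_inv in HB.
      pose proof (psi_lower m c P Q eta d x t Hd (Rlt_le _ _ Hc) (Rlt_le _ _ Heta) Ht).
      pose proof (chi_ge S K R x t ltac:(unfold K; lra) ltac:(lra) Ht).
      fold ps ch in H, H0.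
      assert (G1 : - (m * x) <= Rabs m * Rabs x) by (rewrite <- Rabs_mult, <- Rabs_Ropp; apply Rle_abs).
      assert (G2 : (m * P) * t <= Rabs (m * P) * t) by (apply Rmult_le_compat_r; auto; apply Rle_abs).
      assert (G3 : Q * t <= Rabs Q * t) by (apply Rmult_le_compat_r; auto; apply Rle_abs).
      pose proof (Rabs_pos x).
      assert (G4 : B0 * (1 + Rabs x + t) + Rabs m * Rabs x + Rabs (m * P) * t + Rabs Q * t
                   <= B0 + (S - 1) * (Rabs x + t)).
      { unfold S. pose proof (Rabs_pos m). pose proof (Rabs_pos (m * P)). pose proof (Rabs_pos Q). nra. }
      replace (m * (x - P * t) - Q * t) with (m * x - (m * P) * t - Q * t) in H by ring.
      nra.
    - intros x. unfold Phi. rewrite Hinit.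
      pose proof (psi_init m c P Q eta d x Hd (Rlt_le _ _ Hc)).
      pose proof (chi_nonneg S K R x 0 ltac:(lra)). fold ps ch in H, H0. lra.
    - intros xs ts Hts Hmax.
      assert (Hv := Hsub (fun y s => ps y s + ch y s) (fun y s => psit m c P Q eta d y s + chit S K R y s)
                  (fun y s => psix m c P Q eta d y s + chix S K R y s) xs ts).
      assert (Hle : psit m c P Q eta d xs ts + chit S K R xs ts +
                    F (psix m c P Q eta d xs ts + chix S K R xs ts) <= 0).
      { apply Hv; auto.
        - split; [|split; [|split; [|split]]].
          + apply cont2_plus; auto.
          + apply cont2_plus; auto.
          + apply cont2_plus; auto.
          + intros x t. apply (is_derive_plus (fun s => ps x s) (fun s => ch x s)).
            apply D_psi_t; auto. apply D_chi_t.
          + intros x t. apply (is_derive_plus (fun y => ps y t) (fun y => ch y t)).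
            apply D_psi_x; auto. apply D_chi_x.
        - exists 1. split. lra. intros y s _ _ Hs. apply Hmax. lra. }
      set (px := psix m c P Q eta d xs ts) in *. set (cx := chix S K R xs ts) in *.
      pose proof (psix_range m c P Q eta d xs ts Hd (Rlt_le _ _ Hc)) as Hpx. fold px in Hpx.
      pose proof (chix_bound S K R xs ts ltac:(lra)) as Hcx. fold cx in Hcx.
      assert (Hr0 : Rabs px <= Rabs m + c).
      { apply abs_le. pose proof (Rle_abs m). pose proof (Rle_abs (-m)). rewrite Rabs_Ropp in H0. lra. }
      assert (Hr1 : Rabs px <= Rabs m + c + S) by lra.
      assert (Hr2 : Rabs (px + cx) <= Rabs m + c + S).
      { eapply Rle_trans. apply Rabs_triang. lra. }
      pose proof (lip_F F _ LF (px + cx) px HLF Hr2 Hr1) as HFl. fold KF in HFl.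
      replace (px + cx - px) with cx in HFl by ring.
      rewrite (HPQ px) in HFl by lra.
      pose proof (psi_eq m c P Q eta d xs ts). fold px in H.
      pose proof (chi_pen S K R KF 0 xs ts HKF eq_refl ltac:(lra) ltac:(lra)). fold cx in H0.
      lra. }
  unfold Phi, ps, ch in Hmain. rewrite psi_01 in Hmain by auto.
  pose proof (chi_01 S K R ltac:(lra) HR).
  assert (E1 : S / (4 * (R - 1 - K)) = err / 12).
  { unfold R. replace (1 + K + 3 * S / err - 1 - K) with (3 * S / err) by ring. field. lra. }
  assert (E2 : sqrt d = dd) by (unfold d; apply sqrt_square; lra).
  rewrite E2 in Hmain. assert (E3 : c * dd = err / 3) by (unfold dd; field; lra).
  unfold eta in Hmain. lra.
Qed.


Theorem partB (F : R -> R) (a b P Q m c eps : R) (u : R -> R -> R) :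
  loc_lipschitz F -> (forall p, a < p < b -> F p = P * p + Q) ->
  0 < c -> a < m - c -> m + c < b -> 0 < eps < 1/4 ->
  sol_class u -> visc_sol_viscous eps F u -> initial_datum u (fun x => m * x + c * Rabs (x + P)) ->
  - (m * P) - Q + c * sqrt eps / 4 <= u 0 1.
Proof.
  intros HF HPQ Hc Ha Hb Heps Hsol [Hcont [_ Hsup]] Hinit.
  apply Rle_plus_epsilon. intros err Herr.
  destruct (sol_growth u Hsol) as [B0 [HB0 HB]].
  set (S := B0 + Rabs m + c + Rabs (m * P) + Rabs Q + c * Rabs P + 2 * c + 1).
  assert (HS : 1 <= S) by (unfold S; pose proof (Rabs_pos m); pose proof (Rabs_pos (m*P));
     pose proof (Rabs_pos Q); pose proof (Rabs_pos P); assert (0 <= c * Rabs P) by nra; lra).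
  destruct (HF (Rabs m + c + S)) as [LF HLF].
  set (KF := Rmax 0 LF). assert (HKF : 0 <= KF) by apply Rmax_l.
  set (K := KF + 1).
  set (eta := err / 2). assert (Heta : 0 < eta) by (unfold eta; lra).
  set (R := 1 + K + 2 * S / err).
  assert (HR : 1 + K < R) by (unfold R; assert (0 < 2 * S / err) by (apply Rdiv_lt_0_compat; lra); lra).
  assert (He : 0 < eps) by lra.
  set (ph := phB m c P Q eta eps). set (ch := chi S K R).
  set (Phi := fun x t => (ph x t - ch x t) - u x t).
  destruct (cont2_phB m c P Q eta eps He) as [Cph [Cpht [Cphx Cphxx]]].
  destruct (cont2_chi S K R) as [Cch [Ccht [Cchx Cchxx]]].
  assert (Hmain : Phi 0 1 <= 0).
  { apply compare.
    - intros t Ht x. unfold Phi. apply continuity_pt_minus.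
      apply continuity_pt_minus; apply cont2_x; auto. apply u_cont_x; auto.
    - apply (equi_gen Phi u (fun x t => ph x t - ch x t)
         ((Rabs (- (m * P) - Q - eta) + c * (Rabs P + 2 * sqrt eps)) + S * K)); auto.
      + pose proof (Rabs_pos (- (m * P) - Q - eta)). pose proof (Rabs_pos P). pose proof (sqrt_pos eps).
        unfold K. nra.
      + intros x t s Ht Hs.
        replace (ph x t - ch x t - (ph x s - ch x s)) with ((ph x t - ph x s) - (ch x t - ch x s)) by ring.
        eapply Rle_trans. apply Rabs_triang. rewrite Rabs_Ropp.
        pose proof (phB_lip m c P Q eta eps x t s (Rlt_le _ _ Hc) He Ht Hs).
        pose proof (chi_lip S K R x t s ltac:(lra) ltac:(unfold K; lra)).
        unfold ph, ch. lra.
      + intros x t s. unfold Phi.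
        replace (ph x t - ch x t - u x t - (ph x s - ch x s - u x s)) with
          ((ph x t - ch x t - (ph x s - ch x s)) - (u x t - u x s)) by ring.
        eapply Rle_trans. apply Rabs_triang. rewrite Rabs_Ropp. lra.
    - exists (- u 0 0 + B0 + c * (Rabs P + 2) + S * R). intros x t Ht. unfold Phi.
      specialize (HB x t Ht). apply abs_le_inv in HB.
      pose proof (phB_upper m c P Q eta eps x t (Rlt_le _ _ Hc) ltac:(lra) (Rlt_le _ _ Heta) Ht).
      pose proof (chi_ge S K R x t ltac:(unfold K; lra) ltac:(lra) Ht).
      fold ph ch in H, H0.
      pose proof (Rabs_pos x).
      assert (G4 : B0 * (1 + Rabs x + t) + (Rabs m + c) * Rabs x + (Rabs (m * P) + Rabs Q + c * Rabs P + 2 * c) * t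
                   <= B0 + (S - 1) * (Rabs x + t)).
      { unfold S. pose proof (Rabs_pos m). pose proof (Rabs_pos (m * P)). pose proof (Rabs_pos Q).
        pose proof (Rabs_pos P). assert (0 <= c * Rabs P) by nra.
        assert (0 <= (Rabs (m*P) + Rabs Q + c*Rabs P + 2*c) * Rabs x) by (apply Rmult_le_pos; lra).
        assert (0 <= (Rabs m + c) * t) by (apply Rmult_le_pos; lra). nra. }
      nra.
    - intros x. unfold Phi. rewrite Hinit.
      pose proof (phB_init m c P Q eta eps x (Rlt_le _ _ Hc) He).
      pose proof (chi_nonneg S K R x 0 ltac:(lra)). fold ph ch in H, H0. lra.
    - intros xs ts Hts Hmax.
      assert (Hv := Hsup (fun y s => ph y s - ch y s) (fun y s => phBt m c P Q eta eps y s - chit S K R y s)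
                  (fun y s => phBx m c P Q eta eps y s - chix S K R y s)
                  (fun y s => phBxx m c P Q eta eps y s - chixx S K R y s) xs ts).
      assert (Hge : phBt m c P Q eta eps xs ts - chit S K R xs ts +
                    F (phBx m c P Q eta eps xs ts - chix S K R xs ts) -
                    eps * (phBxx m c P Q eta eps xs ts - chixx S K R xs ts) >= 0).
      { apply Hv; auto.
        - split; [split; [|split; [|split; [|split]]]|split].
          + apply cont2_minus; auto.
          + apply cont2_minus; auto.
          + apply cont2_minus; auto.
          + intros x t. apply (is_derive_minus (fun s => ph x s) (fun s => ch x s)).
            apply D_phB_t; auto. apply D_chi_t.
          + intros x t. apply (is_derive_minus (fun y => ph y t) (fun y => ch y t)).
            apply D_phB_x; auto. apply D_chi_x.
          + apply cont2_minus; auto.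
          + intros x t. apply (is_derive_minus (fun y => phBx m c P Q eta eps y t) (fun y => chix S K R y t)).
            apply D_phBx_x; auto. apply D_chix_x.
        - exists 1. split. lra. intros y s _ _ Hs. pose proof (Hmax y s ltac:(lra)). unfold Phi in H. lra. }
      set (px := phBx m c P Q eta eps xs ts) in *. set (cx := chix S K R xs ts) in *.
      pose proof (phBx_range m c P Q eta eps xs ts (Rlt_le _ _ Hc) He) as Hpx. fold px in Hpx.
      pose proof (chix_bound S K R xs ts ltac:(lra)) as Hcx. fold cx in Hcx.
      assert (Hr0 : Rabs px <= Rabs m + c).
      { apply abs_le. pose proof (Rle_abs m). pose proof (Rle_abs (-m)). rewrite Rabs_Ropp in H0. lra. }
      assert (Hr1 : Rabs px <= Rabs m + c + S) by lra.
      assert (Hr2 : Rabs (px - cx) <= Rabs m + c + S).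
      { unfold Rminus. eapply Rle_trans. apply Rabs_triang. rewrite Rabs_Ropp. lra. }
      pose proof (lip_F F _ LF (px - cx) px HLF Hr2 Hr1) as HFl. fold KF in HFl.
      replace (px - cx - px) with (- cx) in HFl by ring. rewrite Rabs_Ropp in HFl.
      rewrite (HPQ px) in HFl by lra.
      pose proof (phB_eq m c P Q eta eps xs ts (Rlt_le _ _ Hc) He). fold px in H.
      pose proof (chi_pen S K R KF eps xs ts HKF eq_refl ltac:(lra) ltac:(lra)). fold cx in H0.
      destruct H0 as [H0 _]. lra. }
  unfold Phi, ph, ch in Hmain.
  pose proof (phB_01 m c P Q eta eps (Rlt_le _ _ Hc) He).
  pose proof (chi_01 S K R ltac:(lra) HR).
  assert (E1 : S / (4 * (R - 1 - K)) = err / 8).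
  { unfold R. replace (1 + K + 2 * S / err - 1 - K) with (2 * S / err) by ring. field. lra. }
  assert (Eeta : eta = err / 2) by reflexivity. lra.
Qed.


Theorem corollary1p4 (F : R -> R) (a b : R) :
  loc_lipschitz F -> a < b -> affine_on F a b ->
  exists (g : R -> R) (c0 : R), lipschitz g /\ 0 < c0 /\
    forall (eps : R) (ueps u : R -> R -> R),
      0 < eps < 1/4 ->
      sol_class ueps -> visc_sol_viscous eps F ueps -> initial_datum ueps g ->
      sol_class u -> visc_sol_HJ F u -> initial_datum u g ->
      Rabs (ueps 0 1 - u 0 1) >= c0 * sqrt eps.
Proof.
  intros HF Hab [P [Q HPQ]].
  set (m := (a + b) / 2). set (c := (b - a) / 4).
  assert (Hc : 0 < c) by (unfold c; lra).
  assert (Ha : a < m - c) by (unfold m, c; lra).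
  assert (Hb : m + c < b) by (unfold m, c; lra).
  exists (fun x => m * x + c * Rabs (x + P)), (c / 4).
  split; [|split].
  - exists (Rabs m + c). intros x y.
    replace (m * x + c * Rabs (x + P) - (m * y + c * Rabs (y + P))) with
      (m * (x - y) + c * (Rabs (x + P) - Rabs (y + P))) by ring.
    eapply Rle_trans. apply Rabs_triang. rewrite !Rabs_mult, (Rabs_pos_eq c) by lra.
    pose proof (Rabs_triang_inv2 (x + P) (y + P)).
    replace (x + P - (y + P)) with (x - y) in H by ring. nra.
  - lra.
  - intros eps ueps u Heps Hs1 Hv1 Hi1 Hs2 Hv2 Hi2.
    pose proof (partA F a b P Q m c u HF HPQ Hc Ha Hb Hs2 Hv2 Hi2).
    pose proof (partB F a b P Q m c eps ueps HF HPQ Hc Ha Hb Heps Hs1 Hv1 Hi1).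
    apply Rle_ge. eapply Rle_trans; [|apply Rle_abs]. lra.
Qed.
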